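(* In the setting below, for every $H\ge1$, $$\|\widehat{Q}_0-Q_0\|_\infty\le\sum_{h=0}^{H-1}\gamma^{h+1}L\,\big\|(\widehat{P}_\mathcal{K}-P_\mathcal{K})\widehat{V}_{h+1}\big\|_\infty.$$
   Context: $M=(\mathcal{S},\mathcal{A},P,r,\gamma)$ is a discounted MDP (finite $\mathcal{S},\mathcal{A}$, $r\in[0,1]$, $\gamma\in(0,1)$) with $P(s'|s,a)=\sum_{k}\phi_k(s,a)\psi_k(s')$. Regularity assumption: there are a set $\mathcal{K}=\{(s_k,a_k)\}$ of state-action pairs and $L\ge1$ such that for every $(s,a)$ there are real coefficients $\lambda_k^{s,a}$ with $\phi(s,a)=\sum_{k\in\mathcal{K}}\lambda_k^{s,a}\phi(s_k,a_k)$ and $\sum_{k\in\mathcal{K}}|\lambda_k^{s,a}|\le L$. $P_\mathcal{K}$ is the $|\mathcal{K}|\times|\mathcal{S}|$ matrix of rows $P(\cdot|s_k,a_k)$; $\widehat{P}_\mathcal{K}$ has rows the empirical distributions of $N$ samples from $P(\cdot|s_k,a_k)$; $\widehat{P}(s'|s,a)=\sum_k\lambda_k^{s,a}\widehat{P}_\mathcal{K}(s'|s_k,a_k)$ (possibly with negative entries). Value iteration for $H$ steps: $\widehat{V}_H=V_H=0$; for $h=H-1,\dots,0$, $\widehat{Q}_h=r+\gamma\widehat{P}\widehat{V}_{h+1}$, $\widehat{V}_h(s)=\max_a\widehat{Q}_h(s,a)$, and $Q_h=r+\gamma PV_{h+1}$, $V_h(s)=\max_aQ_h(s,a)$. For $V:\mathcal{S}\to\mathbb{R}$,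 $(\widehat{P}_\mathcal{K}-P_\mathcal{K})V$ is the vector $k\mapsto\sum_{s'}(\widehat{P}_\mathcal{K}(s'|s_k,a_k)-P(s'|s_k,a_k))V(s')$. *)

(* Defs.v *)
From HB Require Import structures.
From mathcomp Require Import all_boot all_order all_algebra.
From mathcomp Require Import reals.
Set Implicit Arguments. Unset Strict Implicit. Unset Printing Implicit Defensive.
Import Order.TTheory GRing.Theory Num.Theory.
Local Open Scope ring_scope.

Section Defs.
Variables (R : realType) (S A : finType) (a0 : A).

Definition qof (Pm : S -> A -> S -> R) (r : S -> A -> R) (g : R)
    (V : S -> R) (s : S) (a : A) : R :=
  r s a + g * \sum_(s' : S) Pm s a s' * V s'.

(* V(s) = max_a Q(s,a)  (a0 only supplies the start value of the finite max) *)
Definition bellmanV (Pm : S -> A -> S -> R) (r : S -> A -> R) (g : R)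
    (V : S -> R) : S -> R :=
  fun s => \big[Num.max/qof Pm r g V s a0]_(a : A) qof Pm r g V s a.

(* value function after n backward steps starting from 0:
   with horizon H, V_h = Viter (H - h) (so V_H = 0) *)
Definition Viter (Pm : S -> A -> S -> R) (r : S -> A -> R) (g : R)
    (n : nat) : S -> R :=
  iter n (bellmanV Pm r g) (fun _ => 0).

Definition Qh (Pm : S -> A -> S -> R) (r : S -> A -> R) (g : R)
    (H h : nat) : S -> A -> R :=
  qof Pm r g (Viter Pm r g (H - h.+1)).

Definition supnorm (I : finType) (x : I -> R) : R :=
  \big[Num.max/0]_(i : I) `|x i|.

End Defs.

Definition empirical (R : realType) (S : finType) (N : nat)
    (samp : 'I_N -> S) (s' : S) : R :=
  (#|[set i : 'I_N | samp i == s']|)%:R / N%:R.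

(* Main.v *)
Require Import Defs.
From HB Require Import structures.
From mathcomp Require Import all_boot all_order all_algebra.
From mathcomp Require Import reals ring lra.
Import Order.TTheory GRing.Theory Num.Theory.
Local Open Scope ring_scope.

Lemma max_diff (R : realDomainType) (c x1 x2 y1 y2 : R) :
  `|x1 - y1| <= c -> `|x2 - y2| <= c -> `|Num.max x1 x2 - Num.max y1 y2| <= c.
Proof.
rewrite !ler_norml => /andP[h1 h2] /andP[h3 h4].
case: (leP x1 x2) => hx; case: (leP y1 y2) => hy; apply/andP; split; lra.
Qed.

Lemma bigmax_ge (R : realDomainType) (I : eqType) (r : seq I) (F : I -> R) i :
  i \in r -> F i <= \big[Num.max/0]_(j <- r) F j.
Proof.
elim: r => [|x r IH] //=; rewrite in_cons big_cons => /orP[/eqP->|/IH h].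
  by rewrite le_max lexx.
by rewrite le_max h orbT.
Qed.

Lemma le_supnorm (R : realType) (I : finType) (x : I -> R) i : `|x i| <= supnorm x.
Proof. by rewrite /supnorm; apply: (@bigmax_ge _ _ _ (fun j => `|x j|)); rewrite mem_index_enum. Qed.

Lemma supnorm_le (R : realType) (I : finType) (x : I -> R) c :
  0 <= c -> (forall i, `|x i| <= c) -> supnorm x <= c.
Proof.
move=> c0 h; rewrite /supnorm; apply: (big_ind (fun v => v <= c)) => //.
by move=> u v hu hv; rewrite ge_max hu hv.
Qed.

Lemma supnorm_ge0 (R : realType) (I : finType) (x : I -> R) : 0 <= supnorm x.
Proof.
rewrite /supnorm; apply: (big_ind (fun v => 0 <= v)) => //.
by move=> u v hu hv; rewrite le_max hu.
Qed.

Lemma bellman_diff (R : realType) (S A : finType) (a0 : A) (P1 P2 : S -> A -> S -> R) (r : S -> A -> R) (g : R) (V1 V2 : S -> R) (s : S) (c : R) :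
  (forall a : A, `|qof P1 r g V1 s a - qof P2 r g V2 s a| <= c) ->
  `|bellmanV a0 P1 r g V1 s - bellmanV a0 P2 r g V2 s| <= c.
Proof.
move=> h; rewrite /bellmanV.
apply: (big_ind2 (fun x y => `|x - y| <= c)) => //.
by move=> *; apply: max_diff.
Qed.
Theorem lemma30 (R : realType) (S A : finType) (a0 : A)
  (P : S -> A -> S -> R) (r : S -> A -> R) (gamma : R)
  (d : nat) (phi : S -> A -> 'I_d -> R) (psi : 'I_d -> S -> R)
  (K : finType) (sk : K -> S) (ak : K -> A)
  (lambda : S -> A -> K -> R) (L : R) (N : nat)
  (samples : K -> 'I_N -> S) (H : nat) :
  (forall s a s', 0 <= P s a s') ->
  (forall s a, \sum_(s' : S) P s a s' = 1) ->
  (forall s a, 0 <= r s a <= 1) ->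
  0 < gamma < 1 ->
  (forall s a s', P s a s' = \sum_(k < d) phi s a k * psi k s') ->
  injective (fun k : K => (sk k, ak k)) ->
  1 <= L ->
  (forall s a, forall i : 'I_d,
      phi s a i = \sum_(k : K) lambda s a k * phi (sk k) (ak k) i) ->
  (forall s a, \sum_(k : K) `|lambda s a k| <= L) ->
  (0 < N)%N ->
  (1 <= H)%N ->
  let PhatK : K -> S -> R := fun k s' => empirical R (samples k) s' in
  let Phat : S -> A -> S -> R :=
    fun s a s' => \sum_(k : K) lambda s a k * PhatK k s' in
  let Vhat : nat -> S -> R := fun h => Viter a0 Phat r gamma (H - h) in
  supnorm (fun sa : S * A =>
      Qh a0 Phat r gamma H 0 sa.1 sa.2 - Qh a0 P r gamma H 0 sa.1 sa.2)
  <= \sum_(h < H) gamma ^+ h.+1 * L *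
       supnorm (fun k : K =>
         \sum_(s' : S) (PhatK k s' - P (sk k) (ak k) s') * Vhat h.+1 s').
Proof.
Proof.
move=> hP0 hP1 hr hg hfac hinj hL hlam hlamL hN hH; cbv zeta.
pose PhatK : K -> S -> R := fun k s' => empirical R (samples k) s'.
pose Phat : S -> A -> S -> R := fun s a s' => \sum_(k : K) lambda s a k * PhatK k s'.
have g0 : 0 <= gamma by case/andP: hg => /ltW.
have L0 : 0 <= L by apply: le_trans hL.
set Vi1 := fun m => Viter a0 Phat r gamma m.
set Vi2 := fun m => Viter a0 P r gamma m.
set D := fun m => supnorm (fun k : K =>
         \sum_(s' : S) (PhatK k s' - P (sk k) (ak k) s') * Vi1 m s').
have D0 : forall m, 0 <= D m by move=> m; apply: supnorm_ge0.
set T := fun m => \sum_(j < m.+1) gamma ^+ j.+1 * L * D (m - j)%N.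
have T0 : forall m, 0 <= T m.
  move=> m; apply: sumr_ge0 => j _; apply: mulr_ge0 => //.
  by apply: mulr_ge0 => //; apply: exprn_ge0.
have TS : forall m, T m.+1 = gamma * L * D m.+1 + gamma * T m.
  move=> m; rewrite /T big_ord_recl /= subn0 expr1; congr (_ + _).
  rewrite big_distrr /=; apply: eq_bigr => j _.
  by rewrite /bump /= add1n subSS exprS; ring.
have Pdec : forall s a s', P s a s' = \sum_(k : K) lambda s a k * P (sk k) (ak k) s'.
  move=> s a s'; rewrite hfac.
  under eq_bigr => i _ do rewrite hlam big_distrl /=.
  rewrite exchange_big /=; apply: eq_bigr => k _.
  rewrite hfac big_distrr /=; apply: eq_bigr => i _; ring.
have Xb : forall m s a, `|\sum_(s' : S) (Phat s a s' - P s a s') * Vi1 m s'| <= L * D m.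
  move=> m s a.
  have -> : \sum_(s' : S) (Phat s a s' - P s a s') * Vi1 m s' =
     \sum_(k : K) lambda s a k * \sum_(s' : S) (PhatK k s' - P (sk k) (ak k) s') * Vi1 m s'.
    under eq_bigr => s' _ do rewrite Pdec /Phat -sumrB big_distrl /=.
    rewrite exchange_big /=; apply: eq_bigr => k _.
    rewrite big_distrr /=; apply: eq_bigr => s' _; ring.
  apply: le_trans (ler_norm_sum _ _ _) _.
  apply: le_trans (_ : \sum_(k : K) `|lambda s a k| * D m <= _).
    apply: ler_sum => k _; rewrite normrM; apply: ler_wpM2l => //.
    exact: le_supnorm.
  by rewrite -big_distrl /=; apply: ler_wpM2r.
have Yb : forall s a (V : S -> R) c, (forall s', `|V s'| <= c) ->
    `|\sum_(s' : S) P s a s' * V s'| <= c.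
  move=> s a V c hV; apply: le_trans (ler_norm_sum _ _ _) _.
  apply: le_trans (_ : \sum_(s' : S) P s a s' * c <= _).
    by apply: ler_sum => s' _; rewrite normrM ger0_norm //; apply: ler_wpM2l.
  by rewrite -big_distrl /= hP1 mul1r.
have step : forall m W, (forall s, `|Vi1 m s - Vi2 m s| <= W) -> forall s a,
    `|qof Phat r gamma (Vi1 m) s a - qof P r gamma (Vi2 m) s a| <= gamma * L * D m + gamma * W.
  move=> m W hW s a; rewrite /qof.
  have -> : forall X1 X2 : R, r s a + gamma * X1 - (r s a + gamma * X2) = gamma * (X1 - X2).
    by move=> X1 X2; ring.
  have -> : \sum_(s' : S) Phat s a s' * Vi1 m s' - \sum_(s' : S) P s a s' * Vi2 m s' =
     \sum_(s' : S) (Phat s a s' - P s a s') * Vi1 m s' +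
              \sum_(s' : S) P s a s' * (Vi1 m s' - Vi2 m s').
    rewrite -big_split -sumrB /=.
    by apply: eq_bigr => s' _; ring.
  rewrite normrM ger0_norm // -mulrA -mulrDr; apply: ler_wpM2l => //.
  apply: le_trans (ler_normD _ _) _; apply: lerD; first exact: Xb.
  exact: Yb.
have main : forall m s a,
    `|qof Phat r gamma (Vi1 m) s a - qof P r gamma (Vi2 m) s a| <= T m.
  elim=> [|m IH] s a.
    have := step 0%N 0 _ s a; rewrite mulr0 addr0 /T big_ord1 subn0 expr1; apply.
    by move=> s'; rewrite /Vi1 /Vi2 /= subrr normr0.
  rewrite TS; apply: step => s'.
  exact: (bellman_diff _ _ _ _ _ _ _ _ _ _ _ _ (fun a => IH s' a)).
case: H hH => // m _.
apply: le_trans (_ : T m <= _).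
  apply: supnorm_le => // -[s a] /=; rewrite /Qh subn1 /=; exact: main.
by rewrite /T le_eqVlt; apply/orP; left; apply/eqP; apply: eq_bigr => j _; rewrite subSS.
Qed.
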